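(* Suppose $w$ induces the triangulation $Z$ and fix $\epsilon>0$. There are constants $C,a>0$ (depending on $w,\Delta,\epsilon$) such that for all sufficiently small $\delta>0$: if $S\in Z$ and $x\in P_\Sigma$ satisfy $\rho_m(x)>\epsilon$ for all $m\in S$, then $\rho_m(x)\le C\delta^a$ for every $m\in A\setminus S$ such that $S\cup\{m\}$ is not (the vertex set of) a simplex of $Z$.
   Context: Let $M\cong\mathbb{Z}^2$, $\Delta\subset M_{\mathbb{R}}$ a 2-dimensional lattice polygon, $A=\Delta\cap M$, $P_\Sigma$ the projective toric surface of the normal fan of $\Delta$ with torus $(\mathbb{C}^* )^2$, $s_m(x)=x^m$ for $m\in A$. For $w\in\mathbb{Z}^A$, $\delta\in(0,1)$: $\rho_m=\delta^{2w_m}|s_m|^2/\sum_{m'\in A}\delta^{2w_{m'}}|s_{m'}|^2$ (extended continuously to $P_\Sigma$). We say $w$ induces the triangulation $Z$ if $Z$ is a triangulation of $\Delta$ whose vertex set is all of $A$, each triangle containing no lattice points other than its vertices, such that for every simplex $\sigma$ of $Z$ there is an affine $\ell_\sigma$ with $w_m=\ell_\sigma(m)$ for vertices $m$ of $\sigma$ and $w_m>\ell_\sigma(m)$ for all other $m\in A$. Simplices of $Z$ are identified with their vertex sets $S\subset A$. *)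

(* Defs.v *)
From Stdlib Require Import Reals ZArith List Bool.
From Coquelicot Require Import Coquelicot.
Open Scope R_scope.

Definition pt := (Z * Z)%type.
Definition toR (p : pt) : R * R := (IZR (fst p), IZR (snd p)).

Definition in_hull (V : list (R * R)) (x : R * R) : Prop :=
  exists l : list R,
    length l = length V /\ List.Forall (fun t => 0 <= t) l /\
    fold_right Rplus 0 l = 1 /\
    fst x = fold_right Rplus 0 (map (fun c => fst c * fst (snd c)) (combine l V)) /\
    snd x = fold_right Rplus 0 (map (fun c => fst c * snd (snd c)) (combine l V)).

Definition conv (V : list pt) (x : R * R) : Prop := in_hull (map toR V) x.

(* Delta = conv V is a 2-dimensional lattice polygon: V contains three
   non-collinear lattice points. *)
Definition lattice_polygon (V : list pt) : Prop :=
  exists p q r, In p V /\ In q V /\ In r V /\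
    ((fst q - fst p) * (snd r - snd p) - (snd q - snd p) * (fst r - fst p))%Z <> 0%Z.

Definition enumerates_A (V : list pt) (Al : list pt) : Prop :=
  NoDup Al /\ forall m : pt, In m Al <-> conv V (toR m).

Definition tri := (pt * pt * pt)%type.
Definition tri_verts (T : tri) : list pt :=
  match T with (p, q, r) => p :: q :: r :: nil end.
Definition tri_nondeg (T : tri) : Prop :=
  match T with (p, q, r) =>
    ((fst q - fst p) * (snd r - snd p) - (snd q - snd p) * (fst r - fst p))%Z <> 0%Z
  end.

Definition pt_eqb (p q : pt) : bool := Z.eqb (fst p) (fst q) && Z.eqb (snd p) (snd q).
Definition pt_memb (p : pt) (l : list pt) : bool := existsb (pt_eqb p) l.
Definition common_verts (T1 T2 : tri) : list pt :=
  filter (fun p => pt_memb p (tri_verts T2)) (tri_verts T1).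

Definition triangulation (V Al : list pt) (Zt : list tri) : Prop :=
  (forall T, In T Zt -> tri_nondeg T /\ forall p, In p (tri_verts T) -> In p Al) /\
  (forall x : R * R, conv V x <-> exists T, In T Zt /\ conv (tri_verts T) x) /\
  (forall T1 T2 x, In T1 Zt -> In T2 Zt ->
     conv (tri_verts T1) x -> conv (tri_verts T2) x -> conv (common_verts T1 T2) x) /\
  (forall m, In m Al -> exists T, In T Zt /\ In m (tri_verts T)) /\
  (forall T (p : pt), In T Zt -> conv (tri_verts T) (toR p) -> In p (tri_verts T)).

(* Simplices of Zt (all faces: vertices, edges, triangles), identified with
   their vertex sets S (as predicates on lattice points). *)
Definition is_simplex (Zt : list tri) (S : pt -> Prop) : Prop :=
  (exists p, S p) /\ exists T, In T Zt /\ forall p, S p -> In p (tri_verts T).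

Definition induces (V Al : list pt) (w : pt -> Z) (Zt : list tri) : Prop :=
  triangulation V Al Zt /\
  forall S, is_simplex Zt S ->
    exists a b c : R,
      (forall m, In m Al -> S m -> IZR (w m) = a * IZR (fst m) + b * IZR (snd m) + c) /\
      (forall m, In m Al -> ~ S m -> IZR (w m) > a * IZR (fst m) + b * IZR (snd m) + c).

(* |s_m(x)|^2 for x = (z1, z2) in the torus (C^* )^2. *)
Definition abs_s2 (z1 z2 : C) (m : pt) : R :=
  powerRZ (Cmod z1) (2 * fst m) * powerRZ (Cmod z2) (2 * snd m).

Definition wterm (delta : R) (w : pt -> Z) (z1 z2 : C) (m : pt) : R :=
  powerRZ delta (2 * w m) * abs_s2 z1 z2 m.

Definition rho (Al : list pt) (delta : R) (w : pt -> Z) (z1 z2 : C) (m : pt) : R :=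
  wterm delta w z1 z2 m / fold_right Rplus 0 (map (wterm delta w z1 z2) Al).

(* r : A -> R is the tuple (rho_m(x))_{m in A} of some point x of P_Sigma.
   Since rho extends continuously to the compact P_Sigma in which the torus is
   dense, these tuples are exactly the limits of tuples at torus points. *)
Definition rho_value_on_PSigma (Al : list pt) (delta : R) (w : pt -> Z) (r : pt -> R) : Prop :=
  forall eta : R, 0 < eta ->
    exists z1 z2 : C, z1 <> 0%C /\ z2 <> 0%C /\
      forall m, In m Al -> Rabs (rho Al delta w z1 z2 m - r m) < eta.

(* Main.v *)
Require Import Defs.
From Stdlib Require Import Reals ZArith List Lra Lia Classical.
From Coquelicot Require Import Coquelicot.
Open Scope R_scope.

Definition sumf (f : pt -> R) (T : list pt) : R :=
  fold_right (fun k acc => f k + acc) 0 T.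

Lemma sumf_cons f a T : sumf f (a :: T) = f a + sumf f T.
Proof. reflexivity. Qed.
Lemma sumf_nil f : sumf f nil = 0.
Proof. reflexivity. Qed.
Ltac sstep := rewrite ?sumf_cons, ?sumf_nil; cbn [length In].

Lemma sumf_le_const f T c : (forall k, In k T -> f k <= c) ->
  sumf f T <= INR (length T) * c.
Proof.
  induction T as [|a T IH]; sstep; intros H. simpl; lra.
  rewrite S_INR. assert (f a <= c) by auto.
  assert (sumf f T <= INR (length T) * c) by auto. lra.
Qed.

Lemma sumf_ge_const f T c : (forall k, In k T -> c <= f k) ->
  INR (length T) * c <= sumf f T.
Proof.
  induction T as [|a T IH]; sstep; intros H. simpl; lra.
  rewrite S_INR. assert (c <= f a) by auto.
  assert (INR (length T) * c <= sumf f T) by auto. lra.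
Qed.

Lemma sumf_lin3 f g h u v z T :
  sumf (fun k => f k * u + g k * v + h k * z) T = sumf f T * u + sumf g T * v + sumf h T * z.
Proof. induction T; sstep. ring. rewrite IHT. ring. Qed.

Lemma sumf_aff f g a b c T :
  sumf (fun k => a * f k + b * g k + c) T = a * sumf f T + b * sumf g T + c * INR (length T).
Proof. induction T; sstep. simpl; ring. rewrite IHT, S_INR. ring. Qed.

Lemma sumf_le f g T : (forall k, In k T -> f k <= g k) -> sumf f T <= sumf g T.
Proof.
  induction T as [|a T IH]; sstep; intros H. lra.
  assert (f a <= g a) by auto. assert (sumf f T <= sumf g T) by auto. lra.
Qed.

Lemma sumf_le_one f g T k0 e : (forall k, In k T -> f k <= g k) -> In k0 T ->
  f k0 + e <= g k0 -> sumf f T + e <= sumf g T.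
Proof.
  induction T as [|a T IH]; sstep; intros H Hin He. destruct Hin.
  destruct Hin as [->|Hin].
  - assert (sumf f T <= sumf g T) by (apply sumf_le; auto). lra.
  - assert (f a <= g a) by auto. assert (sumf f T + e <= sumf g T) by auto. lra.
Qed.

Lemma fold_map_ge (f : pt -> R) (Al : list pt) j : (forall k, 0 <= f k) -> In j Al ->
  f j <= fold_right Rplus 0 (map f Al).
Proof.
  intros Hpos. induction Al as [|a Al IH]; simpl; intros Hin. destruct Hin.
  assert (0 <= fold_right Rplus 0 (map f Al)).
  { clear -Hpos. induction Al as [|b Al' IH']; simpl. lra. pose proof (Hpos b). lra. }
  pose proof (Hpos a). destruct Hin as [->|Hin]. lra. specialize (IH Hin). lra.
Qed.

Definition mixl (lam : R) (l1 l2 : list R) :=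
  map (fun p => lam * fst p + (1 - lam) * snd p) (combine l1 l2).

Lemma mix_props lam (V : list (R*R)) : forall l1 l2,
  length l1 = length V -> length l2 = length V ->
  length (mixl lam l1 l2) = length V /\
  fold_right Rplus 0 (mixl lam l1 l2) = lam * fold_right Rplus 0 l1 + (1-lam) * fold_right Rplus 0 l2 /\
  fold_right Rplus 0 (map (fun c => fst c * fst (snd c)) (combine (mixl lam l1 l2) V)) =
    lam * fold_right Rplus 0 (map (fun c => fst c * fst (snd c)) (combine l1 V)) +
    (1-lam) * fold_right Rplus 0 (map (fun c => fst c * fst (snd c)) (combine l2 V)) /\
  fold_right Rplus 0 (map (fun c => fst c * snd (snd c)) (combine (mixl lam l1 l2) V)) =
    lam * fold_right Rplus 0 (map (fun c => fst c * snd (snd c)) (combine l1 V)) +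
    (1-lam) * fold_right Rplus 0 (map (fun c => fst c * snd (snd c)) (combine l2 V)).
Proof.
  induction V as [|v V IH]; intros [|a1 l1] [|a2 l2]; simpl; intros H1 H2;
    try discriminate.
  - repeat split; ring.
  - injection H1 as H1. injection H2 as H2. destruct (IH l1 l2 H1 H2) as [A [B [C D]]].
    unfold mixl in *. simpl. rewrite A, B, C, D. repeat split; ring.
Qed.

Lemma mix_nonneg lam l1 l2 : 0 <= lam <= 1 -> List.Forall (fun t => 0 <= t) l1 ->
  List.Forall (fun t => 0 <= t) l2 -> List.Forall (fun t => 0 <= t) (mixl lam l1 l2).
Proof.
  intros Hl F1. revert l2. unfold mixl. induction F1; intros l2 F2; simpl. constructor.
  destruct l2 as [|b l2]. constructor. inversion F2; subst. simpl. constructor.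
  simpl. nra. apply IHF1; auto.
Qed.

Lemma hull_mix V x y lam : in_hull V x -> in_hull V y -> 0 <= lam <= 1 ->
  in_hull V (lam * fst x + (1-lam) * fst y, lam * snd x + (1-lam) * snd y).
Proof.
  intros [l1 [L1 [F1 [S1 [X1 Y1]]]]] [l2 [L2 [F2 [S2 [X2 Y2]]]]] Hl.
  destruct (mix_props lam V l1 l2 L1 L2) as [A [B [C D]]].
  exists (mixl lam l1 l2). split; auto. split. apply mix_nonneg; auto.
  simpl. rewrite B, C, D, S1, S2, <- X1, <- X2, <- Y1, <- Y2. repeat split; ring.
Qed.

Definition K1 (k : pt) : R := IZR (fst k).
Definition K2 (k : pt) : R := IZR (snd k).

Lemma avg_hull V T : T <> nil -> (forall k, In k T -> in_hull V (toR k)) ->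
  in_hull V (sumf K1 T / INR (length T), sumf K2 T / INR (length T)).
Proof.
  induction T as [|a T IH]; intros Hne H. congruence.
  destruct T as [|b T'].
  - assert (Ha := H a (or_introl eq_refl)). simpl. unfold toR in Ha.
    replace ((K1 a + 0) / 1) with (IZR (fst a)) by (unfold K1; field).
    replace ((K2 a + 0) / 1) with (IZR (snd a)) by (unfold K2; field). exact Ha.
  - set (T := b :: T') in *.
    assert (HT : in_hull V (sumf K1 T / INR (length T), sumf K2 T / INR (length T))).
    { apply IH. unfold T; congruence. intros k Hk. apply H. right; auto. }
    assert (Hn : 0 < INR (length T)) by (unfold T; simpl length; apply lt_0_INR; lia).
    set (n := INR (length T)) in *.
    assert (Ha := H a (or_introl eq_refl)).
    pose proof (hull_mix V _ _ (1 / (n+1)) Ha HT) as M.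
    assert (HM : 0 <= 1/(n+1) <= 1).
    { split. apply Rlt_le, Rdiv_lt_0_compat; lra.
      apply (Rmult_le_reg_r (n+1)). lra. field_simplify; lra. }
    specialize (M HM). cbn [fst snd toR] in M. assert (Hnd : INR (length T) = n) by reflexivity. clearbody n T.
    replace (sumf K1 (a :: T) / INR (length (a :: T))) with
      (1 / (n + 1) * IZR (fst a) + (1 - 1 / (n + 1)) * (sumf K1 T / n)).
    replace (sumf K2 (a :: T) / INR (length (a :: T))) with
      (1 / (n + 1) * IZR (snd a) + (1 - 1 / (n + 1)) * (sumf K2 T / n)). exact M.
    all: cbn [length]; rewrite S_INR, Hnd, sumf_cons; unfold K1, K2. all: field; lra.
Qed.

Lemma min_pos_list (Al : list pt) (P : pt -> Prop) (f : pt -> R) :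
  (forall k, In k Al -> P k -> f k > 0) -> exists g, g > 0 /\ forall k, In k Al -> P k -> f k >= g.
Proof.
  induction Al as [|a Al IH]; intros H.
  - exists 1. split. lra. intros k [].
  - destruct IH as [g [Hg Hk]]. intros k Hk; apply H; simpl; auto.
    destruct (classic (P a)) as [Pa|nPa].
    + exists (Rmin g (f a)). split. apply Rmin_glb_lt; auto. apply H; simpl; auto.
      intros k [<-|Hin] Pk. pose proof (Rmin_r g (f a)); pose proof (H a (or_introl eq_refl) Pa); lra.
      pose proof (Rmin_l g (f a)); pose proof (Hk k Hin Pk); lra.
    + exists g. split; auto. intros k [<-|Hin] Pk. contradiction. auto.
Qed.

Definition affok (w : pt -> Z) (Al : list pt) (s : tri) a b c g :=
  (forall k, In k (tri_verts s) -> IZR (w k) = a * K1 k + b * K2 k + c) /\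
  (forall k, In k Al -> ~ In k (tri_verts s) -> IZR (w k) >= a * K1 k + b * K2 k + c + g).

Lemma gaps w Al (Zt : list tri) :
  (forall s, In s Zt -> exists a b c,
     (forall k, In k (tri_verts s) -> IZR (w k) = a * K1 k + b * K2 k + c) /\
     (forall k, In k Al -> ~ In k (tri_verts s) -> IZR (w k) > a * K1 k + b * K2 k + c)) ->
  exists g, g > 0 /\ forall s, In s Zt -> exists a b c, affok w Al s a b c g.
Proof.
  induction Zt as [|s Zt IH]; intros H.
  - exists 1. split. lra. intros s [].
  - destruct IH as [g [Hg HkZ]]. intros s' Hs'; apply H; simpl; auto.
    destruct (H s (or_introl eq_refl)) as [a [b [c [H1 H2]]]].
    destruct (min_pos_list Al (fun k => ~ In k (tri_verts s))
                (fun k => IZR (w k) - (a * K1 k + b * K2 k + c))) as [g1 [Hg1 Hk1]].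
    { intros k Hk Hn. specialize (H2 k Hk Hn). lra. }
    exists (Rmin g g1). split. apply Rmin_glb_lt; auto.
    intros s' [<-|Hin].
    + exists a, b, c. split; auto. intros k Hk Hn. specialize (Hk1 k Hk Hn).
      pose proof (Rmin_r g g1). lra.
    + destruct (HkZ s' Hin) as [a' [b' [c' [A B]]]]. exists a', b', c'. split; auto.
      intros k Hk' Hn. specialize (B k Hk' Hn). pose proof (Rmin_l g g1). lra.
Qed.

Lemma filter_ex (S : pt -> Prop) (L : list pt) :
  exists Sl, (forall p, In p Sl <-> In p L /\ S p) /\ (length Sl <= length L)%nat.
Proof.
  induction L as [|a L IH].
  - exists nil. split. intros p; simpl; tauto. simpl; lia.
  - destruct IH as [Sl [H1 H2]]. destruct (classic (S a)) as [Sa|nSa].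
    + exists (a :: Sl). split. intros p; simpl. rewrite H1. split.
      intros [<-|[? ?]]; auto. intros [[<-|?] ?]; auto. simpl; lia.
    + exists Sl. split. intros p; simpl. rewrite H1. split. intros [? ?]; auto.
      intros [[<-|?] ?]; auto. contradiction. simpl; lia.
Qed.

Lemma exp_mono x y : x <= y -> exp x <= exp y.
Proof. intros [H|H]. apply Rlt_le, exp_increasing; auto. subst; lra. Qed.

Lemma torus_bound V Al Zt w g eps' delta (z1 z2 : C) (S : pt -> Prop) m :
  0 < g -> (forall s, In s Zt -> exists a b c, affok w Al s a b c g) ->
  (forall x, conv V x -> exists T, In T Zt /\ conv (tri_verts T) x) ->
  (forall k, In k Al -> conv V (toR k)) ->
  (forall T p, In T Zt -> In p (tri_verts T) -> In p Al) ->
  0 < eps' < 1 -> 0 < delta < 1 -> z1 <> 0%C -> z2 <> 0%C ->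
  is_simplex Zt S -> In m Al -> ~ S m -> ~ is_simplex Zt (fun p => S p \/ p = m) ->
  (forall s, S s -> rho Al delta w z1 z2 s > eps') ->
  rho Al delta w z1 z2 m <= exp (14 * (- ln eps' / 2)) * Rpower delta (2 * g).
Proof.
  intros Hg Hgap Hcov HAl Hv Heps Hd Hz1 Hz2 HS Hm HnS Hns Hrho.
  set (kap := - ln eps' / 2).
  assert (Hkap : 0 < kap).
  { unfold kap. pose proof (ln_increasing eps' 1 ltac:(lra) ltac:(lra)). rewrite ln_1 in H. lra. }
  pose proof (proj1 (Cmod_gt_0 z1) Hz1) as Hc1.
  pose proof (proj1 (Cmod_gt_0 z2) Hz2) as Hc2.
  set (u := ln delta).
  assert (Hu : u < 0).
  { unfold u. pose proof (ln_increasing delta 1 ltac:(lra) ltac:(lra)). rewrite ln_1 in H. lra. }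
  set (L1 := ln (Cmod z1)). set (L2 := ln (Cmod z2)).
  set (Psi := fun k : pt => IZR (w k) * u + K1 k * L1 + K2 k * L2).
  assert (Hwt : forall k, wterm delta w z1 z2 k = exp (2 * Psi k)).
  { intro k. unfold wterm, abs_s2, Psi, K1, K2. rewrite !powerRZ_Rpower by lra.
    unfold Rpower. rewrite <- !exp_plus. f_equal. rewrite !mult_IZR. unfold u, L1, L2. ring. }
  set (D := fold_right Rplus 0 (map (wterm delta w z1 z2) Al)).
  assert (HD : forall j, In j Al -> exp (2 * Psi j) <= D).
  { intros j Hj. rewrite <- Hwt. apply fold_map_ge; auto. intro k; rewrite Hwt; apply Rlt_le, exp_pos. }
  assert (HDpos : 0 < D) by (pose proof (HD m Hm); pose proof (exp_pos (2 * Psi m)); lra).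
  assert (Hrho_eq : forall k, rho Al delta w z1 z2 k = exp (2 * Psi k) / D).
  { intro k. unfold rho. rewrite Hwt. reflexivity. }
  destruct HS as [[s0 Hs0] [T0 [HT0 HST0]]].
  assert (HSAl : forall s, S s -> In s Al) by (intros s Hs; apply (Hv T0); auto).
  assert (Hnear : forall s j, S s -> In j Al -> Psi j - kap < Psi s).
  { intros s j Hs Hj. pose proof (Hrho s Hs) as Hr. rewrite Hrho_eq in Hr.
    assert (H1 : eps' * D < exp (2 * Psi s)).
    { replace (exp (2 * Psi s)) with (exp (2 * Psi s) / D * D) by (field; lra).
      apply Rmult_lt_compat_r; lra. }
    assert (H2 : eps' * exp (2 * Psi j) <= eps' * D) by (apply Rmult_le_compat_l; [lra| auto]).
    assert (H3 : exp (ln eps' + 2 * Psi j) < exp (2 * Psi s)).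
    { rewrite exp_plus, exp_ln by lra. lra. }
    apply exp_lt_inv in H3. unfold kap. lra. }
  destruct (filter_ex S (tri_verts T0)) as [Sl [HSl HlenSl]].
  assert (HlenSl3 : (length Sl <= 3)%nat).
  { destruct T0 as [[p q] r]; simpl in HlenSl; lia. }
  set (T := m :: Sl).
  assert (HTe : T = m :: Sl) by reflexivity.
  assert (HTAl : forall k, In k T -> In k Al).
  { intros k [<-|Hk]; auto. apply HSl in Hk. apply HSAl; tauto. }
  set (n := INR (length T)).
  assert (Hn : n = INR (length Sl) + 1) by (unfold n, T; cbn [length]; rewrite S_INR; auto).
  assert (Hns3 : INR (length Sl) <= 3) by (replace 3 with (INR 3) by (simpl; ring); apply le_INR; auto).
  assert (Hns0 : 0 <= INR (length Sl)) by apply pos_INR.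
  assert (Hx : conv V (sumf K1 T / n, sumf K2 T / n)).
  { unfold conv. apply avg_hull. unfold T; discriminate. intros; apply HAl; auto. }
  destruct (Hcov _ Hx) as [sig [Hsig Hxs]].
  assert (Hk0 : exists k0, In k0 T /\ ~ In k0 (tri_verts sig)).
  { apply NNPP. intro Hno. apply Hns. split. exists m; right; auto. exists sig. split; auto.
    intros p Hp. apply NNPP; intro Hnp. apply Hno. exists p. split; auto.
    destruct Hp as [Hp| ->]. right. apply HSl. split; auto. left; auto. }
  destruct Hk0 as [k0 [Hk0T Hk0s]].
  destruct (Hgap sig Hsig) as [a [b [c [Heq Hge]]]].
  assert (HW : sumf (fun k => a * K1 k + b * K2 k + c) T + g <= sumf (fun k => IZR (w k)) T).
  { apply sumf_le_one with k0; auto.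
    - intros k Hk. destruct (classic (In k (tri_verts sig))) as [Hi|Hi].
      rewrite (Heq k Hi); lra. specialize (Hge k (HTAl k Hk) Hi). lra.
    - specialize (Hge k0 (HTAl k0 Hk0T) Hk0s). lra. }
  rewrite sumf_aff in HW. fold n in HW.
  assert (HsumPsi : sumf Psi T = sumf (fun k => IZR (w k)) T * u + sumf K1 T * L1 + sumf K2 T * L2)
    by exact (sumf_lin3 (fun k => IZR (w k)) K1 K2 u L1 L2 T).
  assert (HsumSl : Psi m + INR (length Sl) * (Psi s0 - kap) <= sumf Psi T).
  { rewrite HTe, sumf_cons. pose proof (sumf_ge_const Psi Sl (Psi s0 - kap)) as G.
    assert (INR (length Sl) * (Psi s0 - kap) <= sumf Psi Sl).
    { apply G. intros s Hs. apply HSl in Hs. destruct Hs as [_ Hs].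
      pose proof (Hnear s s0 Hs (HSAl s0 Hs0)). lra. }
    lra. }
  assert (Hn0 : 0 < n) by lra.
  clearbody n T.
  destruct sig as [[p q] r]. unfold conv, in_hull in Hxs.
  destruct Hxs as [l [Hl [Hl0 [Hl1 [HX HY]]]]].
  destruct l as [|l1 [|l2 [|l3 [|? ?]]]]; simpl in Hl; try discriminate.
  rewrite List.Forall_forall in Hl0.
  assert (Hp1 := Hl0 l1 ltac:(simpl; auto)).
  assert (Hp2 := Hl0 l2 ltac:(simpl; auto)).
  assert (Hp3 := Hl0 l3 ltac:(simpl; auto)).
  simpl in Hl1, HX, HY.
  assert (E1 : sumf K1 T = n * (l1 * K1 p + (l2 * K1 q + (l3 * K1 r + 0))))
    by (assert (HX' : sumf K1 T / n = l1 * K1 p + (l2 * K1 q + (l3 * K1 r + 0))) by exact HX;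
        rewrite <- HX'; field; lra).
  assert (E2 : sumf K2 T = n * (l1 * K2 p + (l2 * K2 q + (l3 * K2 r + 0))))
    by (assert (HY' : sumf K2 T / n = l1 * K2 p + (l2 * K2 q + (l3 * K2 r + 0))) by exact HY;
        rewrite <- HY'; field; lra).
  assert (Wp := Heq p ltac:(simpl; auto)).
  assert (Wq := Heq q ltac:(simpl; auto)).
  assert (Wr := Heq r ltac:(simpl; auto)).
  assert (Hup : sumf Psi T <= n * (l1 * Psi p + l2 * Psi q + l3 * Psi r) + u * g).
  { rewrite HsumPsi.
    assert (u * sumf (fun k => IZR (w k)) T <= u * (a * sumf K1 T + b * sumf K2 T + c * n + g))
      by (apply Rmult_le_compat_neg_l; lra).
    assert (Eq : n * (l1 * Psi p + l2 * Psi q + l3 * Psi r) + u * g =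
                 u * (a * sumf K1 T + b * sumf K2 T + c * n + g) + sumf K1 T * L1 + sumf K2 T * L2).
    { rewrite E1, E2. unfold Psi. rewrite Wp, Wq, Wr.
      replace l3 with (1 - l1 - l2) by lra. ring. }
    lra. }
  assert (Hp := Hnear s0 p Hs0 (Hv _ p Hsig ltac:(simpl; auto))).
  assert (Hq := Hnear s0 q Hs0 (Hv _ q Hsig ltac:(simpl; auto))).
  assert (Hr := Hnear s0 r Hs0 (Hv _ r Hsig ltac:(simpl; auto))).
  assert (Hlow : l1 * Psi p + l2 * Psi q + l3 * Psi r <= Psi s0 + kap).
  { assert (l1 * Psi p <= l1 * (Psi s0 + kap)) by (apply Rmult_le_compat_l; lra).
    assert (l2 * Psi q <= l2 * (Psi s0 + kap)) by (apply Rmult_le_compat_l; lra).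
    assert (l3 * Psi r <= l3 * (Psi s0 + kap)) by (apply Rmult_le_compat_l; lra).
    replace (Psi s0 + kap) with ((l1 + (l2 + (l3 + 0))) * (Psi s0 + kap)) by (rewrite Hl1; ring).
    lra. }
  assert (Hlow2 : n * (l1 * Psi p + l2 * Psi q + l3 * Psi r) <= n * (Psi s0 + kap))
    by (apply Rmult_le_compat_l; lra).
  assert (Hk3 : INR (length Sl) * kap <= 3 * kap) by (apply Rmult_le_compat_r; lra).
  assert (Hfin : Psi m - Psi s0 <= 7 * kap + u * g).
  { rewrite Hn in Hlow2. nra. }
  rewrite Hrho_eq.
  apply Rle_trans with (exp (2 * Psi m) / exp (2 * Psi s0)).
  { unfold Rdiv. apply Rmult_le_compat_l. apply Rlt_le, exp_pos.
    apply Rinv_le_contravar. apply exp_pos. apply HD, HSAl; auto. }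
  replace (exp (2 * Psi m) / exp (2 * Psi s0)) with (exp (2 * Psi m - 2 * Psi s0)).
  2: { unfold Rminus. rewrite exp_plus, exp_Ropp. reflexivity. }
  unfold Rpower. rewrite <- exp_plus. apply exp_mono. fold u. lra.
Qed.

Theorem mainTheorem5 (V Al : list pt) (Zt : list tri) (w : pt -> Z) (eps : R) :
  lattice_polygon V -> enumerates_A V Al -> induces V Al w Zt -> 0 < eps ->
  exists C0 a : R, 0 < C0 /\ 0 < a /\
    exists delta0 : R, 0 < delta0 /\
      forall delta : R, 0 < delta -> delta < delta0 -> delta < 1 ->
      forall (S : pt -> Prop) (r : pt -> R),
        is_simplex Zt S ->
        rho_value_on_PSigma Al delta w r ->
        (forall m, S m -> r m > eps) ->
        forall m, In m Al -> ~ S m ->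
          ~ is_simplex Zt (fun p => S p \/ p = m) ->
          r m <= C0 * Rpower delta a.
Proof.
  intros HV HA [Htri Hind] Heps.
  destruct Htri as [Htri1 [Hcov _]].
  assert (Hv : forall T p, In T Zt -> In p (tri_verts T) -> In p Al)
    by (intros T p HT Hp; apply (proj2 (Htri1 T HT)); auto).
  assert (HAl : forall k, In k Al -> conv V (toR k)) by (intros k Hk; apply (proj2 HA k); auto).
  assert (Hcov' : forall x, conv V x -> exists T, In T Zt /\ conv (tri_verts T) x)
    by (intros x Hx; apply Hcov; auto).
  destruct (gaps w Al Zt) as [g [Hg Hgap]].
  { intros s Hs. destruct (Hind (fun p => In p (tri_verts s))) as [a [b [c [H1 H2]]]].
    - split. destruct s as [[p q] r]; exists p; simpl; auto. exists s; auto.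
    - exists a, b, c. split.
      + intros k Hk. apply H1; auto. apply (Hv s); auto.
      + intros k Hk Hn. apply H2; auto. }
  set (eps' := Rmin (eps / 2) (1 / 2)).
  assert (He1 : 0 < eps') by (apply Rmin_glb_lt; lra).
  assert (He2 : eps' <= eps / 2) by apply Rmin_l.
  assert (He3 : eps' <= 1 / 2) by apply Rmin_r.
  exists (exp (14 * (- ln eps' / 2))), (2 * g). split. apply exp_pos. split. lra.
  exists 1. split. lra.
  intros delta Hd0 Hd1 _ S r HS Hr HSr m Hm HnS Hns.
  set (B := exp (14 * (- ln eps' / 2)) * Rpower delta (2 * g)).
  apply Rnot_lt_le. intro Hlt.
  set (eta := Rmin ((r m - B) / 2) (eps / 2)).
  assert (Het : 0 < eta) by (apply Rmin_glb_lt; lra).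
  assert (Het1 : eta <= (r m - B) / 2) by apply Rmin_l.
  assert (Het2 : eta <= eps / 2) by apply Rmin_r.
  destruct (Hr eta Het) as [z1 [z2 [Hz1 [Hz2 Happ]]]].
  assert (Hrs : forall s, S s -> rho Al delta w z1 z2 s > eps').
  { intros s Hs. destruct HS as [_ [T0 [HT0 HST0]]].
    assert (Hs' : In s Al) by (apply (Hv T0); auto).
    pose proof (Happ s Hs') as H. apply Rabs_def2 in H. pose proof (HSr s Hs). lra. }
  pose proof (torus_bound V Al Zt w g eps' delta z1 z2 S m Hg Hgap Hcov' HAl Hv
                ltac:(lra) ltac:(lra) Hz1 Hz2 HS Hm HnS Hns Hrs) as Hb.
  fold B in Hb.
  pose proof (Happ m Hm) as H. apply Rabs_def2 in H. lra.
Qed.
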